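(* Consider the finite-horizon setting below with horizon $T$, transitions $P$, and agent rewards $\rho$, with $p_{\mathrm{maj}},p_{\mathrm{min}}>0$. Let $R_{\max}>0$ with $|R_{s,a}|\le R_{\max}$ and $|\rho_{s,a}|\le R_{\max}$ for all $s,a$. Let $\pi_0$ be a policy with $\Lambda^{(\pi_0)}_{s,a}\ge\lambda_0$ for all $s\in S,a\in A$, for some $\lambda_0>0$. Let $\epsilon,\delta>0$ and let $N_0\ge\dfrac{128\,T^2|S|^2R_{\max}^2\log(2|S|^2|A|/\delta)}{\lambda_0^2\epsilon^2}$. Run $N_0$ independent episodes of $\pi_0$ and form the empirical transition estimate $\hat P$ as described below; let $\hat M$ denote the model with $P$ replaced by $\hat P$. Assume $\Pi_{\mathrm{DP},\epsilon/4}\ne\varnothing$ and let $\pi^*$ be a maximizer of $R^{(\pi)}$ over $\Pi_{\mathrm{DP},\epsilon/4}$ (computed in the true model). Then with probability at least $1-\delta$ over the episodes, the set $\hat\Pi_{\mathrm{DP},\epsilon/2}$ (computed in $\hat M$) is nonempty, and every maximizer $\hat\pi$ of $\hat R^{(\pi)}$ over $\hat\Pi_{\mathrm{DP},\epsilon/2}$ satisfies $\hat\pi\in\Pi_{\mathrm{DP},\epsilon}$ and $R^{(\pi^* )}-R^{(\hat\pi)}\le\epsilon$, where $R^{(\cdot)}$ and $\Pi_{\mathrm{DP},\epsilon}$ refer to the true model.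
   Context: Finite-horizon setting: $S,A$ finite nonempty sets, $D$ a probability distribution on $S$, transition kernel $P$ ($P_{s,a,s'}\ge0$, $\sum_{s'}P_{s,a,s'}=1$), rewards $R\in\mathbb{R}^{S\times A}$, horizon $T\in\mathbb{N}_{\ge1}$. A policy is $\pi\in\mathbb{R}^{S\times A}$ with $\pi_{s,a}\ge0$, $\sum_a\pi_{s,a}=1$. Let $P^{(\pi)}_{s,s'}=\sum_a\pi_{s,a}P_{s,a,s'}$; for a distribution $\mu$, $\mu^{(\pi,0)}=\mu$, $\mu^{(\pi,t)}_{s'}=\sum_s\mu^{(\pi,t-1)}_sP^{(\pi)}_{s,s'}$, and $\bar\mu^{(\pi)}=\frac1T\sum_{t=0}^{T-1}\mu^{(\pi,t)}$. Let $\Lambda^{(\pi)}_{s,a}=\bar D^{(\pi)}_s\pi_{s,a}$ and $R^{(\pi)}=\sum_{s,a}\Lambda^{(\pi)}_{s,a}R_{s,a}$. Fairness: $S=Z\times\tilde S$, $Z=\{\mathrm{maj},\mathrm{min}\}$, agent rewards $\rho\in\mathbb{R}^{S\times A}$; $p_z=\sum_{\tilde s}D_{(z,\tilde s)}$, $(D_z)_s=D_s\mathbb{I}[s=(z,\tilde s)\text{ for some }\tilde s]/p_z$; $\rho_z^{(\pi)}=\sum_{s,a}(\bar D_z^{(\pi)})_s\pi_{s,a}\rho_{s,a}$ where $\bar D_z^{(\pi)}$ is $\bar\mu^{(\pi)}$ for $\mu=D_z$; $\Pi_{\mathrm{DP},\eta}=\{\pi:|\rho_{\mathrm{maj}}^{(\pi)}-\rho_{\mathrm{min}}^{(\pi)}|\le\eta\}$.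 The same quantities with $P$ replaced by $\hat P$ are denoted $\hat R^{(\pi)},\hat\rho_z^{(\pi)},\hat\Pi_{\mathrm{DP},\eta}$. An episode of $\pi_0$ is a random trajectory $s_0\sim D$, $a_t\sim(\pi_0)_{s_t,\cdot}$, $s_{t+1}\sim P_{s_t,a_t,\cdot}$ for $t=0,\dots,T-1$, producing the observed tuples $(s_t,a_t,s_{t+1})$; episodes are independent. $\hat P_{s,a,s'}$ is the number of observed tuples $(s,a,s')$ divided by the number of observed tuples of the form $(s,a,\cdot)$ (an arbitrary distribution if the latter is $0$). *)

(* Defs.v *)
From Stdlib Require Import Reals.
From HB Require Import structures.
From mathcomp Require Import all_boot.

Set Implicit Arguments.
Unset Strict Implicit.
Unset Printing Implicit Defensive.

Local Open Scope R_scope.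

Definition sumR {I : finType} (F : I -> R) : R := \big[Rplus/R0]_(i : I) F i.

Definition is_dist {X : finType} (mu : X -> R) : Prop :=
  (forall x, 0 <= mu x) /\ sumR mu = 1.

Definition is_kernel {S A : finType} (P : S -> A -> S -> R) : Prop :=
  forall s a, is_dist (P s a).

Definition is_policy {S A : finType} (pi : S -> A -> R) : Prop :=
  forall s, is_dist (pi s).

Definition Ppi {S A : finType} (P : S -> A -> S -> R) (pi : S -> A -> R)
  (s s' : S) : R := sumR (fun a : A => pi s a * P s a s').

Fixpoint mu_t {S A : finType} (P : S -> A -> S -> R) (pi : S -> A -> R)
  (mu : S -> R) (t : nat) : S -> R :=
  match t with
  | O => mu
  | t'.+1 => fun s' => sumR (fun s => mu_t P pi mu t' s * Ppi P pi s s')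
  end.

Definition mubar {S A : finType} (P : S -> A -> S -> R) (pi : S -> A -> R)
  (T : nat) (mu : S -> R) (s : S) : R :=
  / INR T * \big[Rplus/R0]_(t < T) mu_t P pi mu t s.

Definition Lam {S A : finType} (P : S -> A -> S -> R) (pi : S -> A -> R)
  (T : nat) (mu : S -> R) (s : S) (a : A) : R := mubar P pi T mu s * pi s a.

(* sum_{s,a} Lambda_{s,a} r_{s,a}; R^(pi) = Ret P pi T D Rw *)
Definition Ret {S A : finType} (P : S -> A -> S -> R) (pi : S -> A -> R)
  (T : nat) (mu : S -> R) (r : S -> A -> R) : R :=
  sumR (fun s => sumR (fun a => Lam P pi T mu s a * r s a)).

(* Fairness: S = Z x St with Z = bool, true = maj, false = min. *)
Definition Zmaj : bool := true.
Definition Zmin : bool := false.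

Definition pz {St : finType} (D : bool * St -> R) (z : bool) : R :=
  sumR (fun st : St => D (z, st)).

Definition Dz {St : finType} (D : bool * St -> R) (z : bool) (s : bool * St) : R :=
  if s.1 == z then D s / pz D z else 0.

Definition rhoz {St A : finType} (P : bool * St -> A -> bool * St -> R)
  (pi : bool * St -> A -> R) (T : nat) (D : bool * St -> R)
  (rho : bool * St -> A -> R) (z : bool) : R :=
  Ret P pi T (Dz D z) rho.

Definition PiDP {St A : finType} (P : bool * St -> A -> bool * St -> R)
  (T : nat) (D : bool * St -> R) (rho : bool * St -> A -> R) (eta : R)
  (pi : bool * St -> A -> R) : Prop :=
  is_policy pi /\ Rabs (rhoz P pi T D rho Zmaj - rhoz P pi T D rho Zmin) <= eta.

Notation episode S A T := ({ffun 'I_T.+1 -> S} * {ffun 'I_T -> A})%type.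

Definition ep_tuple {S A : finType} {T : nat} (e : episode S A T) (t : 'I_T)
  : S * A * S :=
  (e.1 (widen_ord (leqnSn T) t), e.2 t, e.1 (lift ord0 t)).

Definition ep_prob {S A : finType} {T : nat} (D : S -> R) (pi0 : S -> A -> R)
  (P : S -> A -> S -> R) (e : episode S A T) : R :=
  D (e.1 ord0) *
  \big[Rmult/R1]_(t < T)
     (let: (s, a, s') := ep_tuple e t in pi0 s a * P s a s').

Notation dataset S A T N := {ffun 'I_N -> episode S A T}.

Definition data_prob {S A : finType} {T N : nat} (D : S -> R) (pi0 : S -> A -> R)
  (P : S -> A -> S -> R) (d : dataset S A T N) : R :=
  \big[Rmult/R1]_(i < N) ep_prob D pi0 P (d i).

Definition count_sas {S A : finType} {T N : nat} (d : dataset S A T N)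
  (s : S) (a : A) (s' : S) : nat :=
  (\sum_(i < N) \sum_(t < T) (ep_tuple (d i) t == (s, a, s') : nat))%N.

Definition count_sa {S A : finType} {T N : nat} (d : dataset S A T N)
  (s : S) (a : A) : nat :=
  (\sum_(i < N) \sum_(t < T) ((ep_tuple (d i) t).1 == (s, a) : nat))%N.

(* empirical transition estimate; Q gives the (arbitrary) fallback
   distribution used when no tuple (s,a,.) was observed *)
Definition Phat {S A : finType} {T N : nat} (Q : S -> A -> S -> R)
  (d : dataset S A T N) (s : S) (a : A) (s' : S) : R :=
  if (count_sa d s a == 0)%N then Q s a s'
  else INR (count_sas d s a s') / INR (count_sa d s a).

(* Main.v *)
Require Import Defs.
From Stdlib Require Import Reals Lra Lia Psatz.
From HB Require Import structures.
From mathcomp Require Import all_boot.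
Local Open Scope R_scope.

Lemma RplusA' : associative Rplus. Proof. move=> *; ring. Qed.
Lemma RmultA' : associative Rmult. Proof. move=> *; ring. Qed.
Lemma RplusC' : commutative Rplus. Proof. move=> *; ring. Qed.
Lemma RmultC' : commutative Rmult. Proof. move=> *; ring. Qed.
Lemma Rplus0' : left_id R0 Rplus. Proof. move=> *; ring. Qed.
Lemma Rmult1' : left_id R1 Rmult. Proof. move=> *; ring. Qed.
Lemma Rmul0l' : left_zero R0 Rmult. Proof. move=> *; ring. Qed.
Lemma Rmul0r' : right_zero R0 Rmult. Proof. move=> *; ring. Qed.
Lemma RDl' : left_distributive Rmult Rplus. Proof. move=> *; ring. Qed.
Lemma RDr' : right_distributive Rmult Rplus. Proof. move=> *; ring. Qed.
HB.instance Definition _ := Monoid.isComLaw.Build R R0 Rplus RplusA' RplusC' Rplus0'.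
HB.instance Definition _ := Monoid.isComLaw.Build R R1 Rmult RmultA' RmultC' Rmult1'.
HB.instance Definition _ := Monoid.isMulLaw.Build R R0 Rmult Rmul0l' Rmul0r'.
HB.instance Definition _ := Monoid.isAddLaw.Build R Rmult Rplus RDl' RDr'.

Section Sums.
Variable I : Type.

Lemma bigR_le (r : seq I) (P : pred I) (F G : I -> R) :
  (forall i, P i -> F i <= G i) ->
  \big[Rplus/R0]_(i <- r | P i) F i <= \big[Rplus/R0]_(i <- r | P i) G i.
Proof.
move=> H; apply: (big_ind2 (fun x y => x <= y)); [lra| |exact: H].
move=> ? ? ? ? ? ?; lra.
Qed.

Lemma bigR_ge0 (r : seq I) (P : pred I) (F : I -> R) :
  (forall i, P i -> 0 <= F i) -> 0 <= \big[Rplus/R0]_(i <- r | P i) F i.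
Proof.
move=> H; apply: (big_ind (fun x => 0 <= x)); [lra| |exact: H].
move=> ? ? ? ?; lra.
Qed.

Lemma prodR_ge0 (r : seq I) (P : pred I) (F : I -> R) :
  (forall i, P i -> 0 <= F i) -> 0 <= \big[Rmult/R1]_(i <- r | P i) F i.
Proof.
move=> H; apply: (big_ind (fun x => 0 <= x)); [lra| |exact: H].
move=> ? ? ? ?; nra.
Qed.

Lemma bigR_abs (r : seq I) (P : pred I) (F : I -> R) :
  Rabs (\big[Rplus/R0]_(i <- r | P i) F i) <= \big[Rplus/R0]_(i <- r | P i) Rabs (F i).
Proof.
apply: (big_ind2 (fun x y => Rabs x <= y)).
- rewrite Rabs_R0; lra.
- move=> x1 x2 y1 y2 h1 h2; apply: Rle_trans (Rabs_triang _ _) _; lra.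
- move=> i _; lra.
Qed.

Lemma bigR_plus (r : seq I) (P : pred I) (F G : I -> R) :
  \big[Rplus/R0]_(i <- r | P i) (F i + G i) =
  \big[Rplus/R0]_(i <- r | P i) F i + \big[Rplus/R0]_(i <- r | P i) G i.
Proof. exact: big_split. Qed.

Lemma bigR_scal (r : seq I) (P : pred I) (c : R) (F : I -> R) :
  \big[Rplus/R0]_(i <- r | P i) (c * F i) = c * \big[Rplus/R0]_(i <- r | P i) F i.
Proof. by rewrite big_distrr. Qed.

Lemma bigR_opp (r : seq I) (P : pred I) (F : I -> R) :
  \big[Rplus/R0]_(i <- r | P i) (- F i) = - \big[Rplus/R0]_(i <- r | P i) F i.
Proof.
apply: (big_ind2 (fun x y => x = - y)); [lra| |by []].
move=> ? ? ? ? -> ->; lra.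
Qed.

Lemma bigR_exp (r : seq I) (P : pred I) (F : I -> R) :
  exp (\big[Rplus/R0]_(i <- r | P i) F i) = \big[Rmult/R1]_(i <- r | P i) exp (F i).
Proof. apply: (big_morph exp exp_plus exp_0). Qed.

End Sums.

Lemma bigR_INR (I : Type) (r : seq I) (P : pred I) (F : I -> nat) :
  INR (\sum_(i <- r | P i) F i)%N = \big[Rplus/R0]_(i <- r | P i) INR (F i).
Proof.
apply: (big_morph INR); last by [].
move=> x y; rewrite -plus_INR //.
Qed.

Lemma sumR_const (I : finType) (c : R) : sumR (fun _ : I => c) = INR #|I| * c.
Proof.
rewrite /sumR big_const cardE /=.
elim: (enum I) => [|x s IH] /=; first lra.
rewrite IH; destruct (size s); simpl; lra.
Qed.

Lemma sumR_swap (I J : finType) (F : I -> J -> R) :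
  sumR (fun i => sumR (fun j => F i j)) = sumR (fun j => sumR (fun i => F i j)).
Proof. by rewrite /sumR exchange_big. Qed.

Section MDP.
Variables (S A : finType).
Implicit Types (P : S -> A -> S -> R) (pi : S -> A -> R) (mu : S -> R).

Lemma sumR_ge0 (I : finType) (F : I -> R) : (forall i, 0 <= F i) -> 0 <= sumR F.
Proof. move=> H; apply: bigR_ge0 => i _; exact: H. Qed.

Lemma sumR_le (I : finType) (F G : I -> R) : (forall i, F i <= G i) -> sumR F <= sumR G.
Proof. move=> H; apply: bigR_le => i _; exact: H. Qed.

Lemma Ppi_ge0 P pi s s' : is_kernel P -> is_policy pi -> 0 <= Ppi P pi s s'.
Proof.
move=> hP hpi; apply: sumR_ge0 => a.
have := (hP s a).1 s'; have := (hpi s).1 a; nra.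
Qed.

Lemma Ppi_row P pi s : is_kernel P -> is_policy pi -> sumR (Ppi P pi s) = 1.
Proof.
move=> hP hpi; rewrite /Ppi sumR_swap.
rewrite -(hpi s).2; apply: eq_bigr => a _.
have := (hP s a).2; rewrite /sumR bigR_scal => ->; ring.
Qed.

Lemma mu_t_dist P pi mu t : is_kernel P -> is_policy pi -> is_dist mu ->
  is_dist (mu_t P pi mu t).
Proof.
move=> hP hpi hmu; elim: t => [|t [IH0 IH1]] //=; split.
- move=> y; apply: sumR_ge0 => x; have := IH0 x; have := Ppi_ge0 _ _ x y hP hpi; nra.
- rewrite sumR_swap -IH1; apply: eq_bigr => x _.
  have := Ppi_row _ _ x hP hpi; rewrite /sumR bigR_scal => ->; ring.
Qed.

Lemma mubar_dist P pi T mu : is_kernel P -> is_policy pi -> is_dist mu -> (1 <= T)%N ->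
  is_dist (mubar P pi T mu).
Proof.
move=> hP hpi hmu hT.
have hT' : 0 < INR T by apply: lt_0_INR; apply/ltP.
split.
- move=> s; rewrite /mubar; apply: Rmult_le_pos; first by apply: Rlt_le; apply: Rinv_0_lt_compat.
  apply: bigR_ge0 => t _; exact: (mu_t_dist _ _ _ t hP hpi hmu).1.
- rewrite /sumR /mubar bigR_scal exchange_big /=.
  rewrite (eq_bigr (fun _ : 'I_T => 1)).
  + have := sumR_const 'I_T 1; rewrite /sumR => ->; rewrite card_ord; field; lra.
  + move=> t _; have := (mu_t_dist _ _ _ t hP hpi hmu).2; by rewrite /sumR.
Qed.

Lemma Ret_factor P pi T mu r :
  Ret P pi T mu r = sumR (fun s => mubar P pi T mu s * sumR (fun a => pi s a * r s a)).
Proof.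
apply: eq_bigr => s _; rewrite /sumR -bigR_scal; apply: eq_bigr => a _; rewrite /Lam; ring.
Qed.

Lemma inner_bound pi r Rmax s : is_policy pi -> (forall s a, Rabs (r s a) <= Rmax) ->
  Rabs (sumR (fun a => pi s a * r s a)) <= Rmax.
Proof.
move=> hpi hr; rewrite /sumR; apply: Rle_trans (bigR_abs _ _ _ _) _.
apply: Rle_trans (_ : sumR (fun a => pi s a * Rmax) <= _).
- apply: sumR_le => a; rewrite Rabs_mult (Rabs_right (pi s a)); last by apply: Rle_ge; exact: (hpi s).1.
  apply: Rmult_le_compat_l; [exact: (hpi s).1|exact: hr].
- rewrite /sumR (eq_bigr (fun a => Rmax * pi s a)); last by move=> *; ring.
  rewrite bigR_scal; have := (hpi s).2; rewrite /sumR => ->; lra.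
Qed.

Lemma Ret_bound P pi T mu r Rmax : is_kernel P -> is_policy pi -> is_dist mu -> (1 <= T)%N ->
  (forall s a, Rabs (r s a) <= Rmax) -> Rabs (Ret P pi T mu r) <= Rmax.
Proof.
move=> hP hpi hmu hT hr; rewrite Ret_factor.
have [h0 h1] := mubar_dist _ _ _ _ hP hpi hmu hT.
rewrite {1}/sumR; apply: Rle_trans (bigR_abs _ _ _ _) _.
apply: Rle_trans (_ : sumR (fun s => mubar P pi T mu s * Rmax) <= _).
- apply: sumR_le => s; rewrite Rabs_mult (Rabs_right _ (Rle_ge _ _ (h0 s))).
  apply: Rmult_le_compat_l; [exact: h0|exact: inner_bound].
- rewrite /sumR (eq_bigr (fun s => Rmax * mubar P pi T mu s)); last by move=> *; ring.
  rewrite bigR_scal; rewrite /sumR in h1; rewrite h1; lra.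
Qed.

Lemma eq_sumR (I : finType) (F G : I -> R) : (forall i, F i = G i) -> sumR F = sumR G.
Proof. by move=> H; apply: eq_bigr => i _; exact: H. Qed.

Lemma sumR_minus (I : finType) (F G : I -> R) : sumR F - sumR G = sumR (fun i => F i - G i).
Proof.
rewrite /sumR /Rminus bigR_plus bigR_opp //.
Qed.

Lemma sumR_plus (I : finType) (F G : I -> R) : sumR (fun i => F i + G i) = sumR F + sumR G.
Proof. by rewrite /sumR bigR_plus. Qed.

Lemma sumR_scal (I : finType) c (F : I -> R) : sumR (fun i => c * F i) = c * sumR F.
Proof. by rewrite /sumR bigR_scal. Qed.

Lemma sumR_scar (I : finType) c (F : I -> R) : sumR (fun i => F i * c) = sumR F * c.
Proof. rewrite Rmult_comm -sumR_scal; apply: eq_bigr => *; ring. Qed.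

Lemma sumR_abs (I : finType) (F : I -> R) : Rabs (sumR F) <= sumR (fun i => Rabs (F i)).
Proof. exact: bigR_abs. Qed.

Lemma Ppi_diff P P' pi x y e : is_policy pi ->
  (forall s a s', Rabs (P s a s' - P' s a s') <= e) ->
  Rabs (Ppi P pi x y - Ppi P' pi x y) <= e.
Proof.
move=> hpi he; rewrite /Ppi sumR_minus.
apply: Rle_trans (sumR_abs _ _) _.
apply: Rle_trans (_ : sumR (fun a => pi x a * e) <= _).
- apply: sumR_le => a.
  have -> : pi x a * P x a y - pi x a * P' x a y = pi x a * (P x a y - P' x a y) by ring.
  rewrite Rabs_mult Rabs_right; last by apply: Rle_ge; exact: (hpi x).1.
  apply: Rmult_le_compat_l; [exact: (hpi x).1|exact: he].
- rewrite sumR_scar (hpi x).2; lra.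
Qed.

Lemma mu_t_diff P P' pi mu e t : is_kernel P -> is_kernel P' -> is_policy pi -> is_dist mu ->
  (forall s a s', Rabs (P s a s' - P' s a s') <= e) ->
  sumR (fun s => Rabs (mu_t P pi mu t s - mu_t P' pi mu t s)) <= INR t * (INR #|S| * e).
Proof.
move=> hP hP' hpi hmu he; elim: t => [|t IH].
  rewrite /= (@eq_sumR _ _ (fun _ => 0)); last by move=> *; rewrite Rminus_diag Rabs_R0.
  rewrite sumR_const; lra.
have [m0 m1] := mu_t_dist _ _ _ t hP' hpi hmu.
set d := fun x => Rabs (mu_t P pi mu t x - mu_t P' pi mu t x).
apply: Rle_trans (_ : sumR (fun y => sumR (fun x => d x * Ppi P pi x y + mu_t P' pi mu t x * e)) <= _).
  apply: sumR_le => y /=; rewrite sumR_minus.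
  apply: Rle_trans (sumR_abs _ _) _; apply: sumR_le => x.
  have -> : mu_t P pi mu t x * Ppi P pi x y - mu_t P' pi mu t x * Ppi P' pi x y =
    (mu_t P pi mu t x - mu_t P' pi mu t x) * Ppi P pi x y + mu_t P' pi mu t x * (Ppi P pi x y - Ppi P' pi x y) by ring.
  apply: Rle_trans (Rabs_triang _ _) _.
  rewrite !Rabs_mult (Rabs_right (Ppi P pi x y)); last by apply: Rle_ge; exact: Ppi_ge0.
  rewrite (Rabs_right (mu_t P' pi mu t x)); last by apply: Rle_ge.
  apply: Rplus_le_compat_l; apply: Rmult_le_compat_l => //; exact: Ppi_diff.
rewrite sumR_swap.
rewrite (@eq_sumR _ _ (fun x => d x + mu_t P' pi mu t x * (INR #|S| * e))); last first.
  move=> x; rewrite sumR_plus sumR_scal Ppi_row // sumR_const; ring.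
rewrite sumR_plus sumR_scar m1 S_INR; rewrite /d; lra.
Qed.

Lemma sum_ord_INR T : sumR (fun t : 'I_T => INR t) * 2 = INR T * (INR T - 1).
Proof.
elim: T => [|T IH]; first by rewrite /sumR big_ord0 /=; ring.
rewrite /sumR big_ord_recr.
have -> : \big[Rplus/R0]_(i < T) INR (widen_ord (leqnSn T) i) = sumR (fun t : 'I_T => INR t) by [].
have -> : INR (@ord_max T) = INR T by [].
rewrite Rmult_plus_distr_r IH S_INR; ring.
Qed.

Lemma Ret_diff P P' pi T mu r Rmax e : is_kernel P -> is_kernel P' -> is_policy pi -> is_dist mu ->
  (1 <= T)%N -> 0 <= Rmax -> 0 <= e -> (forall s a, Rabs (r s a) <= Rmax) ->
  (forall s a s', Rabs (P s a s' - P' s a s') <= e) ->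
  Rabs (Ret P pi T mu r - Ret P' pi T mu r) <= Rmax * (INR T * (INR #|S| * e)) / 2.
Proof.
move=> hP hP' hpi hmu hT hR e0 hr he.
have hT' : 0 < INR T by apply: lt_0_INR; apply/ltP.
have hiT : 0 < / INR T by apply: Rinv_0_lt_compat.
set dm := fun s => Rabs (mubar P pi T mu s - mubar P' pi T mu s).
have H1 : sumR dm <= INR T * (INR #|S| * e) / 2.
  apply: Rle_trans (_ : sumR (fun s => / INR T * sumR (fun t : 'I_T =>
     Rabs (mu_t P pi mu t s - mu_t P' pi mu t s))) <= _).
    apply: sumR_le => s; rewrite /dm /mubar -Rmult_minus_distr_l Rabs_mult Rabs_right; last lra.
    apply: Rmult_le_compat_l; first lra.
    rewrite -/(sumR _) -/(sumR _) sumR_minus; exact: sumR_abs.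
  rewrite sumR_scal sumR_swap.
  apply: Rle_trans (_ : / INR T * sumR (fun t : 'I_T => INR t * (INR #|S| * e)) <= _).
    apply: Rmult_le_compat_l; first lra.
    apply: sumR_le => t; exact: mu_t_diff.
  rewrite sumR_scar.
  have := sum_ord_INR T => HS.
  have -> : sumR (fun t : 'I_T => INR t) = INR T * (INR T - 1) / 2 by lra.
  have hne : 0 <= INR #|S| * e by apply: Rmult_le_pos; [apply: pos_INR|].
  have -> : / INR T * (INR T * (INR T - 1) / 2 * (INR #|S| * e)) = (INR T - 1) * (INR #|S| * e) / 2.
    field; lra.
  nra.
rewrite !Ret_factor sumR_minus.
apply: Rle_trans (sumR_abs _ _) _.
apply: Rle_trans (_ : sumR (fun s => dm s * Rmax) <= _).
  apply: sumR_le => s.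
  rewrite -Rmult_minus_distr_r Rabs_mult; apply: Rmult_le_compat_l; first exact: Rabs_pos.
  exact: inner_bound.
rewrite sumR_scar; nra.
Qed.


End MDP.
Arguments Ppi_row {S A}. Arguments mu_t_dist {S A}. Arguments mubar_dist {S A}. Arguments Ret_bound {S A}. Arguments Ret_diff {S A}. Arguments Ret_factor {S A}. Arguments Ppi_ge0 {S A}. Arguments inner_bound {S A}.

Lemma sumR_pair (I J : finType) (F : I * J -> R) :
  sumR F = sumR (fun i => sumR (fun j => F (i, j))).
Proof. by rewrite /sumR pair_big; apply: eq_bigr => -[i j]. Qed.

Lemma sumR_bool (F : bool -> R) : sumR F = F true + F false.
Proof. by rewrite /sumR big_bool. Qed.

Lemma Dz_dist (St : finType) (D : bool * St -> R) z : is_dist D -> 0 < pz D z ->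
  is_dist (Dz D z).
Proof.
move=> [h0 h1] hz; split.
- move=> s; rewrite /Dz; case: ifP => _; last lra.
  apply: Rmult_le_pos; [exact: h0|apply: Rlt_le; exact: Rinv_0_lt_compat].
- rewrite sumR_pair sumR_bool /Dz.
  have E0 : forall b, b != z -> sumR (fun j : St => if (b, j).1 == z then D (b, j) / pz D z else 0) = 0.
    move=> b /negbTE hb; rewrite (@eq_sumR _ _ (fun _ => 0)); last by move=> j /=; rewrite hb.
    rewrite sumR_const; ring.
  have E1 : sumR (fun j : St => if (z, j).1 == z then D (z, j) / pz D z else 0) = 1.
    rewrite (@eq_sumR _ _ (fun j => D (z, j) * / pz D z)); last by move=> j /=; rewrite eqxx.
    rewrite sumR_scar; rewrite /pz in hz *; field; lra.
  case: z hz E0 E1 => hz E0 E1.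
  + rewrite E1 (E0 false) //; ring.
  + rewrite E1 (E0 true) //; ring.
Qed.

Section Counts.
Variables (S A : finType) (T N : nat).

Lemma count_sum (d : dataset S A T N) s a :
  (\sum_(s' : S) count_sas d s a s')%N = count_sa d s a.
Proof.
rewrite /count_sas /count_sa exchange_big; apply: eq_bigr => i _.
rewrite exchange_big; apply: eq_bigr => t _.
move: (ep_tuple (d i) t) => -[[x y] z] /=.
case: eqP => [[-> ->]|hne].
- rewrite (bigD1 z) //= eqxx big1 ?addn0 // => j hj.
  apply/eqP; rewrite eqb0; apply/negP => /eqP [hz]; move: hj; by rewrite hz eqxx.
- apply: big1 => j _; apply/eqP; rewrite eqb0; apply/negP => /eqP [h1 h2 h3].
  by apply: hne; rewrite h1 h2.
Qed.

Lemma Phat_kernel (Q : S -> A -> S -> R) (d : dataset S A T N) :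
  is_kernel Q -> is_kernel (Phat Q d).
Proof.
move=> hQ s a; rewrite /Phat; case: eqP => h0; first exact: hQ.
have hc : 0 < INR (count_sa d s a) by apply: lt_0_INR; apply/ltP; rewrite lt0n; apply/eqP.
split.
- move=> s'; apply: Rmult_le_pos; [exact: pos_INR|apply: Rlt_le; exact: Rinv_0_lt_compat].
- rewrite /Rdiv sumR_scar /sumR -bigR_INR count_sum; field; lra.
Qed.

End Counts.

Section Path.
Variables (S : finType) (D : S -> R) (K : nat -> S -> S -> R).

Fixpoint nu (n : nat) : S -> R :=
  match n with
  | O => D
  | n'.+1 => fun y => sumR (fun x => nu n' x * K n' x y)
  end.

Definition pathw n (f : {ffun 'I_n.+1 -> S}) : R :=
  D (f ord0) * \big[Rmult/R1]_(t < n) K t (f (inord t)) (f (inord t.+1)).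

Definition extf n (f : {ffun 'I_n.+1 -> S}) (x : S) : {ffun 'I_n.+2 -> S} :=
  [ffun i : 'I_n.+2 => if (i < n.+1)%N then f (inord i) else x].

Definition splitf n (g : {ffun 'I_n.+2 -> S}) : {ffun 'I_n.+1 -> S} * S :=
  ([ffun j : 'I_n.+1 => g (inord j)], g ord_max).

Lemma sum_ext n (F : {ffun 'I_n.+2 -> S} -> R) :
  sumR F = sumR (fun f => sumR (fun x => F (extf n f x))).
Proof.
rewrite /sumR pair_big /=.
rewrite (reindex (fun p : {ffun 'I_n.+1 -> S} * S => extf n p.1 p.2)) /=.
  by [].
apply: onW_bij; exists (splitf n).
- move=> [f x]; rewrite /splitf /extf; congr pair.
  + apply/ffunP => j; rewrite !ffunE inordK; last by apply: (ltn_trans (ltn_ord j)).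
    rewrite ltn_ord; congr (f _); apply: val_inj; rewrite /= inordK //.
  + by rewrite ffunE /= ltnn.
- move=> g; apply/ffunP => i; rewrite /splitf /extf !ffunE /=.
  case: ifP => hi.
  + congr (g _); apply: val_inj => /=.
    have hi' : (inord i : 'I_n.+1) = i :> nat by rewrite inordK.
    rewrite inordK hi' //; exact: (ltn_trans (ltn_ord _)).
  + congr (g _); apply: val_inj => /=; apply/eqP; rewrite eqn_leq leqNgt hi /=.
    exact: (ltn_ord i).
Qed.
Lemma extf_val n f x i : (i < n.+1)%N -> extf n f x (inord i) = f (inord i).
Proof. move=> hi; rewrite /extf ffunE inordK ?hi //; exact: ltnW. Qed.

Lemma extf_last n f x : extf n f x (inord n.+1) = x.
Proof. by rewrite /extf ffunE inordK // ltnn. Qed.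

Lemma extf_max n f x : extf n f x ord_max = x.
Proof. by rewrite /extf ffunE /= ltnn. Qed.

Lemma pathw_ext n f x : pathw n.+1 (extf n f x) = pathw n f * K n (f ord_max) x.
Proof.
rewrite /pathw big_ord_recr /=.
have -> : extf n f x ord0 = f ord0.
  have -> : (ord0 : 'I_n.+2) = inord 0 by apply: val_inj; rewrite /= inordK.
  rewrite extf_val //; congr (f _); apply: val_inj; rewrite /= inordK //.
have -> : f ord_max = f (inord n) by congr (f _); apply: val_inj; rewrite /= inordK.
rewrite extf_val // extf_last.
rewrite (eq_bigr (fun t : 'I_n => K t (f (inord t)) (f (inord t.+1)))); first by ring.
move=> t _; rewrite (extf_val _ _ _ t); last exact: (ltn_trans (ltn_ord t)).
rewrite extf_val //; exact: (ltn_ord t).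
Qed.

Lemma sum_ffun1 (F : {ffun 'I_1 -> S} -> R) : sumR F = sumR (fun x => F [ffun _ => x]).
Proof.
rewrite /sumR (reindex (fun x : S => [ffun _ : 'I_1 => x])) //.
apply: onW_bij; exists (fun f : {ffun 'I_1 -> S} => f ord0).
- by move=> x; rewrite ffunE.
- move=> f; apply/ffunP => i; rewrite ffunE; congr (f _); apply: val_inj; by case: i => -[].
Qed.

Lemma path_sum n (phi : S -> R) :
  sumR (fun f : {ffun 'I_n.+1 -> S} => pathw n f * phi (f ord_max)) =
  sumR (fun y => nu n y * phi y).
Proof.
elim: n phi => [|n IH] phi.
  rewrite sum_ffun1; apply: eq_sumR => y; rewrite /pathw big_ord0 !ffunE /=; ring.
rewrite sum_ext.
rewrite (@eq_sumR _ _ (fun f => pathw n f * sumR (fun x => K n (f ord_max) x * phi x))); last first.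
  move=> f; rewrite -sumR_scal; apply: eq_sumR => x; rewrite pathw_ext extf_max. by rewrite Rmult_assoc.
rewrite (IH (fun y => sumR (fun x => K n y x * phi x))) /=.
rewrite (@eq_sumR _ _ (fun y => sumR (fun x => nu n y * K n y x * phi x))); last first.
  by move=> y; rewrite -sumR_scal; apply: eq_sumR => x; ring.
rewrite sumR_swap; apply: eq_sumR => x; rewrite -sumR_scar //.
Qed.

End Path.
Arguments nu {S}. Arguments pathw {S}. Arguments path_sum {S}.

Section Episode.
Variables (S A : finType) (T : nat) (D : S -> R) (pi0 : S -> A -> R) (P : S -> A -> S -> R).

Definition Kh (h : nat -> S * A * S -> R) (t : nat) (x y : S) : R :=
  sumR (fun a => pi0 x a * P x a y * h t (x, a, y)).

Lemma prodR_split (I : finType) (F G : I -> R) :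
  \big[Rmult/R1]_(i : I) F i * \big[Rmult/R1]_(i : I) G i = \big[Rmult/R1]_(i : I) (F i * G i).
Proof. by rewrite big_split. Qed.

Lemma ep_sum (h : nat -> S * A * S -> R) :
  sumR (fun e : episode S A T =>
    ep_prob D pi0 P e * \big[Rmult/R1]_(t < T) h t (ep_tuple e t)) =
  sumR (nu D (Kh h) T).
Proof.
rewrite sumR_pair.
have -> : sumR (nu D (Kh h) T) = sumR (fun y => nu D (Kh h) T y * 1).
  by apply: eq_sumR => y; ring.
rewrite -path_sum; apply: eq_sumR => f.
rewrite /ep_prob.
rewrite (@eq_sumR _ _ (fun g : {ffun 'I_T -> A} => D (f ord0) *
   \big[Rmult/R1]_(t < T) (pi0 (f (inord t)) (g t) * P (f (inord t)) (g t) (f (inord t.+1))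
        * h t (f (inord t), g t, f (inord t.+1))))); last first.
  move=> g; rewrite Rmult_assoc prodR_split; congr (_ * _).
  apply: eq_bigr => t _; rewrite /ep_tuple /=.
  have -> : widen_ord (leqnSn T) t = inord t :> 'I_T.+1.
    by apply: val_inj; rewrite /= inordK // ltnW // ltnS.
  have -> : lift ord0 t = inord t.+1 :> 'I_T.+1.
    by apply: val_inj; rewrite /= inordK // ltnS.
  by [].
rewrite sumR_scal /pathw Rmult_1_r; congr (_ * _).
rewrite /Kh /sumR bigA_distr_bigA //.
Qed.

End Episode.
Arguments Kh {S A}. Arguments ep_sum {S A}.

Lemma nu_sum_step (S : finType) (D : S -> R) K n :
  sumR (nu D K n.+1) = sumR (fun x => nu D K n x * sumR (K n x)).
Proof.
rewrite /= sumR_swap; apply: eq_sumR => x; by rewrite sumR_scal.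
Qed.

Lemma nu_ge0 (S : finType) (D : S -> R) K n : (forall x, 0 <= D x) ->
  (forall t x y, 0 <= K t x y) -> forall y, 0 <= nu D K n y.
Proof.
move=> hD hK; elim: n => [|n IH] y //=.
apply: sumR_ge0 => x; apply: Rmult_le_pos; [exact: IH|exact: hK].
Qed.

Lemma nu_sub (S : finType) (D : S -> R) K n : (forall x, 0 <= D x) ->
  (forall t x y, 0 <= K t x y) -> (forall t x, sumR (K t x) <= 1) ->
  sumR (nu D K n) <= sumR D.
Proof.
move=> hD hK h1; elim: n => [|n IH] /=; first lra.
rewrite -/(nu D K n.+1) nu_sum_step; apply: Rle_trans IH.
apply: sumR_le => x; have := @nu_ge0 _ _ _ n hD hK x; have := h1 n x; nra.
Qed.

Lemma nu_stoch (S : finType) (D : S -> R) K m n : (forall t x, (m <= t)%N -> sumR (K t x) = 1) ->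
  sumR (nu D K (m + n)) = sumR (nu D K m).
Proof.
move=> h1; elim: n => [|n IH]; first by rewrite addn0.
rewrite addnS nu_sum_step -IH; apply: eq_sumR => x; rewrite h1 ?leq_addr //; ring.
Qed.

Definition indR (b : bool) : R := if b then 1 else 0.

Lemma sumR_pick (I : finType) (F : I -> R) x0 : (forall x, x != x0 -> F x = 0) -> sumR F = F x0.
Proof.
move=> H; rewrite /sumR (bigD1 x0) //= big1 ?Rplus_0_r // => x hx; exact: H.
Qed.

Section EpFacts.
Variables (S A : finType) (T : nat) (D : S -> R) (pi0 : S -> A -> R) (P : S -> A -> S -> R).
Hypotheses (hD : is_dist D) (hP : is_kernel P) (hpi : is_policy pi0).

Lemma nu_one (h : nat -> S * A * S -> R) m : (forall t z, (t < m)%N -> h t z = 1) ->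
  forall n y, (n <= m)%N -> nu D (Kh pi0 P h) n y = mu_t P pi0 D n y.
Proof.
move=> h1; elim=> [|n IH] y hn //=.
apply: eq_sumR => x; rewrite IH ?(ltnW hn) //; congr (_ * _).
apply: eq_sumR => a; rewrite h1 //; ring.
Qed.

Lemma Kh_row1 (h : nat -> S * A * S -> R) t x : (forall z, h t z = 1) ->
  sumR (Kh pi0 P h t x) = 1.
Proof.
move=> h1; rewrite -(Ppi_row _ _ x hP hpi); apply: eq_sumR => y.
apply: eq_sumR => a; rewrite h1; ring.
Qed.

Lemma ep_total : sumR (fun e : episode S A T => ep_prob D pi0 P e) = 1.
Proof.
have := ep_sum T D pi0 P (fun _ _ => 1).
rewrite (@eq_sumR _ _ (fun e => ep_prob D pi0 P e)); last first.
  by move=> e; rewrite big1 ?Rmult_1_r.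
move=> ->; transitivity (sumR (mu_t P pi0 D T)); last exact: (mu_t_dist _ _ _ T hP hpi hD).2.
apply: eq_sumR => y; by apply: (nu_one (fun _ _ => 1) T).
Qed.

Lemma ep_marg (t0 : 'I_T) s0 a0 :
  sumR (fun e : episode S A T => ep_prob D pi0 P e * indR ((ep_tuple e t0).1 == (s0, a0))) =
  mu_t P pi0 D t0 s0 * pi0 s0 a0.
Proof.
pose h := fun (t : nat) (z : S * A * S) => if t == t0 then indR (z.1 == (s0, a0)) else 1.
have := ep_sum T D pi0 P h.
rewrite (@eq_sumR _ _ (fun e => ep_prob D pi0 P e * indR ((ep_tuple e t0).1 == (s0, a0)))); last first.
  move=> e; congr (_ * _); rewrite (bigD1 t0) //= /h eqxx big1 ?Rmult_1_r // => t ht.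
  by rewrite ifF //; apply/negbTE.
move=> ->.
have E : T = (t0.+1 + (T - t0.+1))%N by rewrite subnKC.
rewrite [X in sumR (nu _ _ X)]E.
rewrite nu_stoch; last first.
  move=> t x ht; apply: Kh_row1 => z; rewrite /h ifF //; apply/negbTE.
  by rewrite neq_ltn ltnNge ht orbT.
rewrite nu_sum_step.
rewrite (@sumR_pick _ _ s0); last first.
  move=> x hx; rewrite (@eq_sumR _ _ (fun _ => 0)) ?sumR_const; first ring.
  move=> y; rewrite /Kh (@eq_sumR _ _ (fun _ => 0)) ?sumR_const; first ring.
  by move=> a; rewrite /h eqxx /indR /= xpair_eqE (negbTE hx) /=; ring.
rewrite (nu_one h t0) //; last by move=> t z ht; rewrite /h ifF //; apply/negbTE; rewrite neq_ltn ht.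
congr (_ * _).
rewrite /Kh sumR_swap (@sumR_pick _ _ a0).
  rewrite /h eqxx /indR /= !eqxx /=.
  rewrite (@eq_sumR _ _ (fun y => pi0 s0 a0 * P s0 a0 y)); last by move=> y; ring.
  rewrite sumR_scal (hP s0 a0).2; ring.
move=> a ha; rewrite (@eq_sumR _ _ (fun _ => 0)) ?sumR_const; first ring.
by move=> y; rewrite /h eqxx /indR /= xpair_eqE eqxx (negbTE ha) /=; ring.
Qed.

Lemma ep_mg (g : S * A * S -> R) : (forall z, 0 <= g z) ->
  (forall x, sumR (fun a => pi0 x a * sumR (fun y => P x a y * g (x, a, y))) <= 1) ->
  sumR (fun e : episode S A T => ep_prob D pi0 P e * \big[Rmult/R1]_(t < T) g (ep_tuple e t)) <= 1.
Proof.
move=> g0 g1; rewrite (ep_sum T D pi0 P (fun _ z => g z)) -hD.2.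
apply: nu_sub.
- exact: hD.1.
- move=> t x y; apply: sumR_ge0 => a; apply: Rmult_le_pos; last exact: g0.
  apply: Rmult_le_pos; [exact: (hpi x).1|exact: (hP x a).1].
- move=> t x; apply: Rle_trans (g1 x); rewrite /Kh sumR_swap; apply: Req_le; apply: eq_sumR => a.
  rewrite -sumR_scal; apply: eq_sumR => y; ring.
Qed.

End EpFacts.

Lemma prodR_const (N : nat) (c : R) : \big[Rmult/R1]_(i < N) c = c ^ N.
Proof.
rewrite big_const_ord; elim: N => [|N IH] //=; rewrite IH //.
Qed.

Lemma exp_le_1 u : u <= 1/2 -> exp u <= 1 + u + 2 * u ^ 2.
Proof.
move=> hu.
have h1 := exp_ineq1_le (- u).
have h2 : exp u * exp (- u) = 1 by rewrite -exp_plus Rplus_opp_r exp_0.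
have h3 := exp_pos u.
nra.
Qed.

Section Data.
Variables (S A : finType) (T N : nat) (D : S -> R) (pi0 : S -> A -> R) (P : S -> A -> S -> R).
Hypotheses (hD : is_dist D) (hP : is_kernel P) (hpi : is_policy pi0).

Lemma data_prod (F : episode S A T -> R) :
  sumR (fun d : dataset S A T N => data_prob D pi0 P d * \big[Rmult/R1]_(i < N) F (d i)) =
  (sumR (fun e => ep_prob D pi0 P e * F e)) ^ N.
Proof.
rewrite -prodR_const /sumR bigA_distr_bigA; apply: eq_bigr => d _.
by rewrite /data_prob prodR_split.
Qed.

Lemma data_total : sumR (fun d : dataset S A T N => data_prob D pi0 P d) = 1.
Proof.
have := data_prod (fun _ => 1).
rewrite (@eq_sumR _ _ (fun e => ep_prob D pi0 P e)); last by move=> e; ring.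
rewrite ep_total // pow1 => <-; apply: eq_sumR => d; rewrite big1 ?Rmult_1_r //.
Qed.

End Data.

Lemma indR_sq b : indR b * indR b = indR b.
Proof. by case: b => /=; ring. Qed.

Lemma indR_01 b : 0 <= indR b <= 1.
Proof. case: b => /=; lra. Qed.

Lemma sumR_term (I : finType) (F : I -> R) i : (forall j, 0 <= F j) -> F i <= sumR F.
Proof.
move=> h; rewrite /sumR (bigD1 i) //=; have : 0 <= \big[Rplus/R0]_(j | j != i) F j.
  by apply: bigR_ge0 => j _.
lra.
Qed.

Lemma sumR_ind (I : finType) (F : I -> R) i : sumR (fun j => F j * indR (j == i)) = F i.
Proof.
rewrite (@sumR_pick _ _ i) /= ?eqxx /=; first ring.
by move=> j /negbTE hj; rewrite hj /=; ring.
Qed.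

Lemma bern_bound (S : finType) (q : S -> R) s' sg lam : is_dist q -> sg * sg = 1 ->
  0 <= lam <= 1/2 ->
  sumR (fun y => q y * exp (sg * lam * (indR (y == s') - q s') - lam ^ 2 / 2)) <= 1.
Proof.
move=> [q0 q1] hsg hlam.
set p := q s'.
have hp : 0 <= p <= 1 by split; [exact: q0|rewrite -q1; exact: sumR_term].
have hsg' : -1 <= sg <= 1 by nra.
apply: Rle_trans (_ : sumR (fun y => q y * ((1 + (sg * lam * (indR (y == s') - p))
     + 2 * (sg * lam * (indR (y == s') - p)) ^ 2) * exp (- (lam ^ 2 / 2)))) <= _).
  apply: sumR_le => y; apply: Rmult_le_compat_l; first exact: q0.
  rewrite /Rminus exp_plus; apply: Rmult_le_compat_r; first by apply: Rlt_le; apply: exp_pos.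
  apply: exp_le_1; have := indR_01 (y == s'); move: (indR (y == s')) => iy hi.
  have hw : sg * (iy + - p) <= 1 by nra.
  have -> : sg * lam * (iy + - p) = lam * (sg * (iy + - p)) by ring.
  nra.
rewrite (@eq_sumR _ _ (fun y => (q y + sg * lam * (q y * indR (y == s')) - sg * lam * p * q y
   + 2 * lam ^ 2 * ((1 - 2 * p) * (q y * indR (y == s')) + p ^ 2 * q y)) * exp (- (lam ^ 2 / 2)))); last first.
  move=> y; have := indR_sq (y == s'); move: (indR (y == s')) => iy hi.
  have e2 : (sg * lam * (iy - p)) ^ 2 = lam ^ 2 * (iy * iy - 2 * p * iy + p ^ 2).
    have -> : (sg * lam * (iy - p)) ^ 2 = (sg * sg) * lam ^ 2 * (iy * iy - 2 * p * iy + p ^ 2) by ring.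
    rewrite hsg; ring.
  rewrite e2 hi; ring.
rewrite sumR_scar.
have Hs : sumR (fun y => q y + sg * lam * (q y * indR (y == s')) - sg * lam * p * q y
   + 2 * lam ^ 2 * ((1 - 2 * p) * (q y * indR (y == s')) + p ^ 2 * q y)) =
   1 + 2 * lam ^ 2 * (p * (1 - p)).
  rewrite (@eq_sumR _ _ (fun y => q y * (1 - sg * lam * p + 2 * lam ^ 2 * p ^ 2)
       + q y * indR (y == s') * (sg * lam + 2 * lam ^ 2 * (1 - 2 * p)))); last first.
    by move=> y; ring.
  rewrite sumR_plus !sumR_scar sumR_ind q1 -/p; ring.
rewrite Hs; clearbody p; clear Hs.
have he := exp_ineq1_le (lam ^ 2 / 2).
have h2 : exp (lam ^ 2 / 2) * exp (- (lam ^ 2 / 2)) = 1 by rewrite -exp_plus Rplus_opp_r exp_0.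
have h3 := exp_pos (- (lam ^ 2 / 2)).
have hpp : p * (1 - p) <= 1/4 by have := Rle_0_sqr (p - 1/2); rewrite /Rsqr; lra.
have hl : 1 + 2 * lam ^ 2 * (p * (1 - p)) <= exp (lam ^ 2 / 2) by nra.
nra.
Qed.

Section Est.
Variables (S A : finType) (T : nat) (D : S -> R) (pi0 : S -> A -> R) (P : S -> A -> S -> R).
Hypotheses (hD : is_dist D) (hP : is_kernel P) (hpi : is_policy pi0) (hT : (1 <= T)%N).
Variables (s : S) (a : A).

Definition Ce (e : episode S A T) : R := sumR (fun t : 'I_T => indR ((ep_tuple e t).1 == (s, a))).

Lemma Ce_bounds e : 0 <= Ce e <= INR T.
Proof.
split; first by apply: sumR_ge0 => t; exact: (indR_01 _).1.
rewrite -(card_ord T) -[INR _]Rmult_1_r -sumR_const; apply: sumR_le => t; exact: (indR_01 _).2.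
Qed.

Lemma Ce_mean : sumR (fun e => ep_prob D pi0 P e * Ce e) = INR T * Lam P pi0 T D s a.
Proof.
have hT' : 0 < INR T by apply: lt_0_INR; apply/ltP.
rewrite (@eq_sumR _ _ (fun e => sumR (fun t : 'I_T => ep_prob D pi0 P e * indR ((ep_tuple e t).1 == (s, a))))); last first.
  by move=> e; rewrite /Ce sumR_scal.
rewrite sumR_swap (@eq_sumR _ _ (fun t : 'I_T => mu_t P pi0 D t s * pi0 s a)); last first.
  by move=> t; rewrite ep_marg.
rewrite sumR_scar /Lam /mubar -/(sumR _); field; lra.
Qed.

Lemma Ce_exp : sumR (fun e => ep_prob D pi0 P e * exp (- (Ce e / (2 * INR T)))) <=
  1 - Lam P pi0 T D s a / 4.
Proof.
have hT' : 0 < INR T by apply: lt_0_INR; apply/ltP.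
apply: Rle_trans (_ : sumR (fun e => ep_prob D pi0 P e * 1 - / (4 * INR T) * (ep_prob D pi0 P e * Ce e)) <= _).
  apply: sumR_le => e.
  have hp : 0 <= ep_prob D pi0 P e.
    apply: Rmult_le_pos; first exact: hD.1.
    apply: prodR_ge0 => t _; rewrite /=; apply: Rmult_le_pos; [exact: (hpi _).1|exact: (hP _ _).1].
  have [c0 c1] := Ce_bounds e.
  set y := Ce e / (2 * INR T).
  have hy0 : 0 <= y by rewrite /y; apply: Rmult_le_pos => //; apply: Rlt_le; apply: Rinv_0_lt_compat; lra.
  have hy1 : y <= 1/2.
    rewrite /y; apply: (Rmult_le_reg_r (2 * INR T)); first lra.
    rewrite /Rdiv Rmult_assoc Rinv_l; lra.
  have he := exp_ineq1_le y.
  have h2 : exp y * exp (- y) = 1 by rewrite -exp_plus Rplus_opp_r exp_0.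
  have h3 := exp_pos (- y).
  have hb : exp (- y) <= 1 - y / 2 by nra.
  have -> : / (4 * INR T) * (ep_prob D pi0 P e * Ce e) = ep_prob D pi0 P e * (y / 2).
    rewrite /y; field; lra.
  nra.
rewrite -sumR_minus sumR_scal Ce_mean.
rewrite (@eq_sumR _ _ (fun e => ep_prob D pi0 P e)); last by move=> e; ring.
rewrite ep_total //; apply: Req_le; field; lra.
Qed.

Variable s' : S.

Definition cz (sg lam : R) (z : S * A * S) : R :=
  indR (z.1 == (s, a)) * (sg * lam * (indR (z.2 == s') - P s a s') - lam ^ 2 / 2).

Definition Ye (sg lam : R) (e : episode S A T) : R := sumR (fun t : 'I_T => cz sg lam (ep_tuple e t)).

Lemma Ye_mg sg lam : sg * sg = 1 -> 0 <= lam <= 1/2 ->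
  sumR (fun e => ep_prob D pi0 P e * exp (Ye sg lam e)) <= 1.
Proof.
move=> hsg hlam.
rewrite (@eq_sumR _ _ (fun e => ep_prob D pi0 P e * \big[Rmult/R1]_(t < T) exp (cz sg lam (ep_tuple e t)))); last first.
  by move=> e; rewrite /Ye /sumR bigR_exp.
apply: (@ep_mg S A T D pi0 P hD hP hpi (fun z => exp (cz sg lam z))).
  by move=> z; apply: Rlt_le; apply: exp_pos.
move=> x; rewrite -(hpi x).2; apply: sumR_le => b.
rewrite -[X in _ <= X]Rmult_1_r; apply: Rmult_le_compat_l; first exact: (hpi x).1.
case: (boolP ((x, b) == (s, a))) => hxb.
- move/eqP: hxb => [-> ->].
  rewrite (@eq_sumR _ _ (fun y => P s a y * exp (sg * lam * (indR (y == s') - P s a s') - lam ^ 2 / 2))); last first.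
    by move=> y; rewrite /cz /= eqxx /=; rewrite Rmult_1_l.
  exact: bern_bound.
- rewrite (@eq_sumR _ _ (fun y => P x b y)); last first.
    by move=> y; rewrite /cz /= (negbTE hxb) /= Rmult_0_l exp_0 Rmult_1_r.
  rewrite (hP x b).2; lra.
Qed.

End Est.
Arguments Ce {S A T}. Arguments cz {S A}. Arguments Ye {S A T}.

Lemma INR_b (b : bool) : INR (b : nat) = indR b.
Proof. by case: b. Qed.

Lemma pow_le1 x n : 0 <= x <= 1 -> x ^ n <= 1.
Proof. move=> hx; rewrite -(pow1 n); apply: pow_incr; lra. Qed.

Section Data2.
Variables (S A : finType) (T N : nat) (D : S -> R) (pi0 : S -> A -> R) (P : S -> A -> S -> R).
Hypotheses (hD : is_dist D) (hP : is_kernel P) (hpi : is_policy pi0) (hT : (1 <= T)%N).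

Lemma ep_prob_ge0 (e : episode S A T) : 0 <= ep_prob D pi0 P e.
Proof.
apply: Rmult_le_pos; first exact: hD.1.
apply: prodR_ge0 => t _; rewrite /=; apply: Rmult_le_pos; [exact: (hpi _).1|exact: (hP _ _).1].
Qed.

Lemma data_prob_ge0 (d : dataset S A T N) : 0 <= data_prob D pi0 P d.
Proof. apply: prodR_ge0 => i _; exact: ep_prob_ge0. Qed.

Lemma count_sa_Ce (d : dataset S A T N) s a :
  INR (count_sa d s a) = sumR (fun i => Ce s a (d i)).
Proof.
rewrite /count_sa bigR_INR; apply: eq_bigr => i _; rewrite bigR_INR; apply: eq_bigr => t _.
by rewrite INR_b.
Qed.

Lemma count_Ye (d : dataset S A T N) s a s' sg lam :
  sumR (fun i => Ye P s a s' sg lam (d i)) =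
  sg * lam * (INR (count_sas d s a s') - P s a s' * INR (count_sa d s a))
  - lam ^ 2 / 2 * INR (count_sa d s a).
Proof.
have -> : INR (count_sas d s a s') = sumR (fun i => sumR (fun t : 'I_T =>
   indR ((ep_tuple (d i) t).1 == (s, a)) * indR ((ep_tuple (d i) t).2 == s'))).
  rewrite /count_sas bigR_INR; apply: eq_bigr => i _.
  rewrite bigR_INR; apply: eq_bigr => t _; rewrite INR_b.
  by move: (ep_tuple (d i) t) => -[[x y] z] /=; rewrite xpair_eqE; case: (_ == _); case: (_ == _) => /=; ring.
rewrite count_sa_Ce /Ye /cz /Ce.
set c1 := sg * lam. set c2 := - (sg * lam * P s a s') - lam ^ 2 / 2.
rewrite (@eq_sumR _ _ (fun i => sumR (fun t : 'I_T => c1 * (indR ((ep_tuple (d i) t).1 == (s, a)) *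
     indR ((ep_tuple (d i) t).2 == s')) + c2 * indR ((ep_tuple (d i) t).1 == (s, a))))); last first.
  by move=> i; apply: eq_sumR => t; rewrite /c1 /c2; ring.
rewrite (@eq_sumR _ _ (fun i => c1 * sumR (fun t : 'I_T => indR ((ep_tuple (d i) t).1 == (s, a)) *
     indR ((ep_tuple (d i) t).2 == s')) + c2 * sumR (fun t : 'I_T => indR ((ep_tuple (d i) t).1 == (s, a))))); last first.
  by move=> i; rewrite sumR_plus !sumR_scal.
rewrite sumR_plus !sumR_scal /c1 /c2; ring.
Qed.

Lemma tail_count s a k :
  sumR (fun d : dataset S A T N => data_prob D pi0 P d *
     exp ((k - INR (count_sa d s a)) / (2 * INR T))) <=
  exp (k / (2 * INR T)) * (1 - Lam P pi0 T D s a / 4) ^ N.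
Proof.
have hT' : 0 < INR T by apply: lt_0_INR; apply/ltP.
rewrite (@eq_sumR _ _ (fun d => exp (k / (2 * INR T)) * (data_prob D pi0 P d *
   \big[Rmult/R1]_(i < N) exp (- (Ce s a (d i) / (2 * INR T)))))); last first.
  move=> d; rewrite -bigR_exp -/(sumR _).
  have -> : sumR (fun i => - (Ce s a (d i) / (2 * INR T))) = - (INR (count_sa d s a) / (2 * INR T)).
    rewrite count_sa_Ce (@eq_sumR _ _ (fun i => (- / (2 * INR T)) * Ce s a (d i))); last first.
      by move=> i; rewrite /Rdiv; ring.
    rewrite sumR_scal -Ropp_mult_distr_l Rmult_comm; reflexivity.
  have -> : (k - INR (count_sa d s a)) / (2 * INR T) = k / (2 * INR T) + - (INR (count_sa d s a) / (2 * INR T)) by field; lra.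
  rewrite exp_plus; ring.
rewrite sumR_scal (@data_prod S A T N D pi0 P (fun e => exp (- (Ce s a e / (2 * INR T))))).
apply: Rmult_le_compat_l; first by apply: Rlt_le; apply: exp_pos.
apply: pow_incr; split.
  apply: sumR_ge0 => e; apply: Rmult_le_pos; [exact: ep_prob_ge0|apply: Rlt_le; apply: exp_pos].
exact: Ce_exp.
Qed.

Lemma tail_mg s a s' sg lam : sg * sg = 1 -> 0 <= lam <= 1/2 ->
  sumR (fun d : dataset S A T N => data_prob D pi0 P d *
     exp (sumR (fun i => Ye P s a s' sg lam (d i)))) <= 1.
Proof.
move=> hsg hlam.
rewrite (@eq_sumR _ _ (fun d => data_prob D pi0 P d *
   \big[Rmult/R1]_(i < N) exp (Ye P s a s' sg lam (d i)))); last first.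
  by move=> d; rewrite -bigR_exp.
rewrite (@data_prod S A T N D pi0 P (fun e => exp (Ye P s a s' sg lam e))); apply: pow_le1; split.
  apply: sumR_ge0 => e; apply: Rmult_le_pos; [exact: ep_prob_ge0|apply: Rlt_le; apply: exp_pos].
exact: Ye_mg.
Qed.

End Data2.

Definition Rleb (x y : R) : bool := if Rle_dec x y then true else false.
Lemma RlebP x y : reflect (x <= y) (Rleb x y).
Proof. by rewrite /Rleb; case: Rle_dec => h; constructor. Qed.

Definition sgn (b : bool) : R := if b then 1 else -1.
Lemma sgn_sq b : sgn b * sgn b = 1.
Proof. by case: b => /=; ring. Qed.

Lemma sumR_mul_swap (I J : finType) (w : I -> R) (F : I -> J -> R) :
  sumR (fun i => w i * sumR (fun j => F i j)) = sumR (fun j => sumR (fun i => w i * F i j)).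
Proof.
rewrite -sumR_swap; apply: eq_sumR => i; by rewrite sumR_scal.
Qed.

Lemma exp_ge1 x : 0 <= x -> 1 <= exp x.
Proof. move=> h; have := exp_ineq1_le x; lra. Qed.

Section Final.
Variables (S A : finType) (T N : nat) (D : S -> R) (pi0 : S -> A -> R) (P : S -> A -> S -> R).
Hypotheses (hD : is_dist D) (hP : is_kernel P) (hpi : is_policy pi0) (hT : (1 <= T)%N).

Definition goodb (lam k : R) (d : dataset S A T N) : bool :=
  [forall s, forall a, Rleb k (INR (count_sa d s a)) &&
     [forall s', Rleb (Rabs (INR (count_sas d s a s') - P s a s' * INR (count_sa d s a)))
                      (lam * INR (count_sa d s a))]].

Definition Bd (lam k : R) (d : dataset S A T N) : R :=
  sumR (fun s => sumR (fun a =>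
    exp ((k - INR (count_sa d s a)) / (2 * INR T)) +
    sumR (fun s' => sumR (fun b : bool =>
      exp (sumR (fun i => Ye P s a s' (sgn b) lam (d i)) - lam ^ 2 * k / 2))))).

Lemma Bd_bad lam k d : 0 <= lam -> ~~ goodb lam k d -> 1 <= Bd lam k d.
Proof.
move=> hlam /forallPn [s /forallPn [a h]].
have hT' : 0 < INR T by apply: lt_0_INR; apply/ltP.
have pos : forall x, 0 <= exp x by move=> x; apply: Rlt_le; apply: exp_pos.
set E1 := exp ((k - INR (count_sa d s a)) / (2 * INR T)).
set E2 := fun s' b => exp (sumR (fun i => Ye P s a s' (sgn b) lam (d i)) - lam ^ 2 * k / 2).
have step : 1 <= E1 + sumR (fun s' => sumR (fun b => E2 s' b)).
  have hE2 : 0 <= sumR (fun s' => sumR (fun b => E2 s' b)).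
    by apply: sumR_ge0 => s'; apply: sumR_ge0 => b; exact: pos.
  case: (Rle_dec k (INR (count_sa d s a))) => hk; last first.
    have : 1 <= E1 by apply: exp_ge1; apply: Rmult_le_pos; [lra|apply: Rlt_le; apply: Rinv_0_lt_compat; lra].
    lra.
  move: h; rewrite negb_and => /orP [/RlebP //|/forallPn [s' /RlebP hX]].
  set C := INR (count_sa d s a) in hk hX *.
  set X := INR (count_sas d s a s') - P s a s' * C in hX.
  have hC : 0 <= C by exact: pos_INR.
  move/Rnot_le_lt: hX => hX.
  have [b hb] : exists b, lam * C < sgn b * X.
    case: (Rle_dec 0 X) => hx.
    - exists true; rewrite /sgn; rewrite Rabs_right in hX; lra.
    - exists false; rewrite /sgn; rewrite Rabs_left in hX; lra.
  have : 1 <= E2 s' b.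
    apply: exp_ge1; rewrite count_Ye // -/C -/X.
    have : lam * (lam * C) <= lam * (sgn b * X) by apply: Rmult_le_compat_l => //; lra.
    move=> hh; have h2 : 0 <= lam ^ 2 * (C - k) by apply: Rmult_le_pos; [apply: pow2_ge_0|lra].
    nra.
  have := @sumR_term _ (fun b => E2 s' b) b (fun _ => pos _).
  have := @sumR_term _ (fun s' => sumR (fun b => E2 s' b)) s'
    (fun j => @sumR_ge0 _ _ (fun b => pos _)).
  move=> h1 h2 h3; have hE1 : 0 <= E1 by exact: pos.
  lra.
have gen : forall (I : finType) (F : I -> R) i, (forall j, 0 <= F j) -> 1 <= F i -> 1 <= sumR F.
  move=> I F i h0 h1; have := @sumR_term _ F i h0; lra.
have nn : forall s a, 0 <= exp ((k - INR (count_sa d s a)) / (2 * INR T)) +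
    sumR (fun s' => sumR (fun b : bool =>
      exp (sumR (fun i => Ye P s a s' (sgn b) lam (d i)) - lam ^ 2 * k / 2))).
  move=> s0 a0; apply: Rplus_le_le_0_compat; first exact: pos.
  by apply: sumR_ge0 => s'; apply: sumR_ge0 => b; exact: pos.
apply: (gen _ _ s).
  by move=> s0; apply: sumR_ge0 => a0; exact: nn.
exact: (gen _ _ a (nn s) step).
Qed.

Lemma Lam_le1 s a : Lam P pi0 T D s a <= 1.
Proof.
have [m0 m1] := mubar_dist P pi0 T D hP hpi hD hT.
have h1 : mubar P pi0 T D s <= 1 by rewrite -m1; apply: sumR_term.
have h2 : pi0 s a <= 1 by rewrite -(hpi s).2; apply: sumR_term; exact: (hpi s).1.
have := m0 s; have := (hpi s).1 a; rewrite /Lam; nra.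
Qed.

Lemma Bd_mass lam k l0 : 0 <= lam <= 1/2 -> (forall s a, l0 <= Lam P pi0 T D s a) ->
  sumR (fun d : dataset S A T N => data_prob D pi0 P d * Bd lam k d) <=
  INR #|S| * (INR #|A| * (exp (k / (2 * INR T)) * (1 - l0 / 4) ^ N +
     INR #|S| * (INR 2 * exp (- (lam ^ 2 * k / 2))))).
Proof.
move=> hlam hl0.
rewrite -!sumR_const.
rewrite /Bd sumR_mul_swap; apply: sumR_le => s.
rewrite sumR_mul_swap; apply: sumR_le => a.
rewrite (@eq_sumR _ _ (fun d => data_prob D pi0 P d * exp ((k - INR (count_sa d s a)) / (2 * INR T)) +
   data_prob D pi0 P d * sumR (fun s' => sumR (fun b : bool =>
      exp (sumR (fun i => Ye P s a s' (sgn b) lam (d i)) - lam ^ 2 * k / 2))))); last first.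
  by move=> d; rewrite Rmult_plus_distr_l.
rewrite sumR_plus; apply: Rplus_le_compat.
  apply: Rle_trans (tail_count _ _ _ _ _ _ _ hD hP hpi hT s a k) _.
  apply: Rmult_le_compat_l; first by apply: Rlt_le; apply: exp_pos.
  apply: pow_incr; have := hl0 s a; have := Lam_le1 s a; lra.
rewrite sumR_mul_swap; apply: sumR_le => s'.
rewrite sumR_mul_swap.
have -> : INR 2 = INR #|{: bool}| by rewrite card_bool.
rewrite -sumR_const; apply: sumR_le => b.
rewrite (@eq_sumR _ _ (fun d => exp (- (lam ^ 2 * k / 2)) * (data_prob D pi0 P d *
   exp (sumR (fun i => Ye P s a s' (sgn b) lam (d i)))))); last first.
  by move=> d; rewrite /Rminus exp_plus; ring.
rewrite sumR_scal -[X in _ <= X]Rmult_1_r; apply: Rmult_le_compat_l.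
  by apply: Rlt_le; apply: exp_pos.
apply: tail_mg => //; exact: sgn_sq.
Qed.

Lemma Bd_ge0 lam k d : 0 <= Bd lam k d.
Proof.
apply: sumR_ge0 => s; apply: sumR_ge0 => a; apply: Rplus_le_le_0_compat.
  by apply: Rlt_le; apply: exp_pos.
by apply: sumR_ge0 => s'; apply: sumR_ge0 => b; apply: Rlt_le; apply: exp_pos.
Qed.

Lemma good_mass lam k l0 : 0 <= lam <= 1/2 -> (forall s a, l0 <= Lam P pi0 T D s a) ->
  1 - INR #|S| * (INR #|A| * (exp (k / (2 * INR T)) * (1 - l0 / 4) ^ N +
     INR #|S| * (INR 2 * exp (- (lam ^ 2 * k / 2))))) <=
  \big[Rplus/R0]_(d in [set d | goodb lam k d]) data_prob D pi0 P d.
Proof.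
move=> hlam hl0.
set G := [set d | goodb lam k d].
have tot := data_total S A T N D pi0 P hD hP hpi.
have split : forall F : dataset S A T N -> R, sumR F =
   \big[Rplus/R0]_(d in G) F d + \big[Rplus/R0]_(d | d \notin G) F d.
  by move=> F; rewrite /sumR (bigID (fun d => d \in G)).
have hbad : \big[Rplus/R0]_(d | d \notin G) data_prob D pi0 P d <=
    \big[Rplus/R0]_(d | d \notin G) (data_prob D pi0 P d * Bd lam k d).
  apply: bigR_le => d; rewrite inE => hd.
  have := Bd_bad lam k d hlam.1 hd; have := data_prob_ge0 _ _ _ _ _ _ _ hD hP hpi d; nra.
have hin : 0 <= \big[Rplus/R0]_(d in G) (data_prob D pi0 P d * Bd lam k d).
  apply: bigR_ge0 => d _; apply: Rmult_le_pos; [exact: data_prob_ge0|exact: Bd_ge0].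
have hm := Bd_mass lam k l0 hlam hl0.
rewrite split in hm; rewrite split in tot.
lra.
Qed.

Lemma good_Phat lam k (Q : S -> A -> S -> R) d s a s' : 0 < k -> goodb lam k d ->
  Rabs (Phat Q d s a s' - P s a s') <= lam.
Proof.
move=> hk /forallP /(_ s) /forallP /(_ a) /andP [/RlebP hC /forallP /(_ s') /RlebP hX].
have hC0 : 0 < INR (count_sa d s a) by lra.
rewrite /Phat; case: eqP => h0.
  by move: hC0; rewrite h0 /=; lra.
have -> : INR (count_sas d s a s') / INR (count_sa d s a) - P s a s' =
  (INR (count_sas d s a s') - P s a s' * INR (count_sa d s a)) / INR (count_sa d s a).
  field; lra.
set X := INR (count_sas d s a s') - P s a s' * INR (count_sa d s a) in hX *.
set C := INR (count_sa d s a) in hC0 hX *.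
have eX : X = X / C * C by field; lra.
rewrite eX Rabs_mult (Rabs_right C) in hX; last lra.
have := Rabs_pos (X / C); nra.
Qed.

End Final.

Lemma det_conclusion (St A : finType) (D : bool * St -> R) (P Ph : bool * St -> A -> bool * St -> R)
  (Rw rho : bool * St -> A -> R) (T : nat) (eps eta : R) (pistar : bool * St -> A -> R) :
  0 < eps ->
  (forall pi, is_policy pi -> Rabs (Ret P pi T D Rw - Ret Ph pi T D Rw) <= eta) ->
  (forall pi z, is_policy pi -> Rabs (rhoz P pi T D rho z - rhoz Ph pi T D rho z) <= eta) ->
  2 * eta <= eps / 4 ->
  PiDP P T D rho (eps / 4) pistar ->
  (forall pi, PiDP P T D rho (eps / 4) pi -> Ret P pi T D Rw <= Ret P pistar T D Rw) ->
  (exists pi, PiDP Ph T D rho (eps / 2) pi) /\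
  forall pihat,
    PiDP Ph T D rho (eps / 2) pihat ->
    (forall pi, PiDP Ph T D rho (eps / 2) pi -> Ret Ph pi T D Rw <= Ret Ph pihat T D Rw) ->
    PiDP P T D rho eps pihat /\ Ret P pistar T D Rw - Ret P pihat T D Rw <= eps.
Proof.
move=> he hR hr heta [pol_s fair_s] _.
have tri : forall x y u v, Rabs (x - y) <= Rabs (u - v) + Rabs (x - u) + Rabs (y - v).
  move=> x y u v.
  have -> : x - y = (u - v) + (x - u) - (y - v) by ring.
  apply: Rle_trans (Rabs_triang _ _) _; rewrite Rabs_Ropp; apply: Rplus_le_compat_r.
  exact: Rabs_triang.
have hs : PiDP Ph T D rho (eps / 2) pistar.
  split => //.
  apply: Rle_trans (tri _ _ (rhoz P pistar T D rho Zmaj) (rhoz P pistar T D rho Zmin)) _.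
  have h1 := hr pistar Zmaj pol_s; have h2 := hr pistar Zmin pol_s.
  rewrite Rabs_minus_sym in h1; rewrite Rabs_minus_sym in h2; lra.
split; first by exists pistar.
move=> pihat [pol_h fair_h] hmax; split.
  split => //.
  apply: Rle_trans (tri _ _ (rhoz Ph pihat T D rho Zmaj) (rhoz Ph pihat T D rho Zmin)) _.
  have h1 := hr pihat Zmaj pol_h; have h2 := hr pihat Zmin pol_h; lra.
have h1 := hR pistar pol_s; have h2 := hR pihat pol_h.
have h3 := hmax pistar hs.
move: h1 h2; rewrite /Rabs; do 2 case: Rcase_abs => ? ; lra.
Qed.

Lemma exp_le_mono x y : x <= y -> exp x <= exp y.
Proof. case/Rle_lt_or_eq_dec => h; [apply: Rlt_le; exact: exp_increasing|by rewrite h; lra]. Qed.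

Lemma exp_pow x n : exp x ^ n = exp (INR n * x).
Proof.
elim: n => [|n IH]; first by rewrite /= Rmult_0_l exp_0.
have -> : exp x ^ n.+1 = exp x * exp x ^ n by [].
rewrite IH -exp_plus; congr exp; rewrite S_INR; ring.
Qed.

Lemma numeric (n m T l0 eps Rmax delta : R) (N0 : nat) :
  2 <= n -> 1 <= m -> 1 <= T -> 0 < l0 -> l0 * (n * m) <= 1 -> 0 < eps -> eps < 4 * Rmax ->
  0 < delta -> delta < 1 ->
  128 * T ^ 2 * n ^ 2 * Rmax ^ 2 * ln (2 * n ^ 2 * m / delta) / (l0 ^ 2 * eps ^ 2) <= INR N0 ->
  n * (m * (exp (INR N0 * T * l0 / 4 / (2 * T)) * (1 - l0 / 4) ^ N0 +
     n * (INR 2 * exp (- ((eps / (4 * T * n * Rmax)) ^ 2 * (INR N0 * T * l0 / 4) / 2))))) <= delta.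
Proof.
move=> hn hm hT hl0 hl1 he he4 hd hd1 hN.
set L := ln (2 * n ^ 2 * m / delta) in hN *.
set N := INR N0 in hN *.
have hR : 0 < Rmax by lra.
have hx : 1 < 2 * n ^ 2 * m / delta.
  apply: (Rmult_lt_reg_r delta) => //; rewrite /Rdiv Rmult_assoc Rinv_l; last lra.
  have : 4 <= n ^ 2 by nra.
  nra.
have hL : 0 < L by rewrite /L -ln_1; apply: ln_increasing; lra.
have eL : exp (- L) = delta / (2 * n ^ 2 * m).
  rewrite exp_Ropp /L exp_ln; last lra.
  have h2 : 2 * n ^ 2 * m <> 0 by nra.
  field; split; [lra|split; lra].
have hnm : 2 <= n * m by nra.
have hl2 : l0 <= 1/2.
  have : l0 * 2 <= l0 * (n * m) by apply: Rmult_le_compat_l; lra.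
  lra.
set Kc := 128 * T ^ 2 * n ^ 2 * Rmax ^ 2 * L / (l0 ^ 2 * eps ^ 2) in hN *.
have hKc : Kc * l0 = L * (8 * (16 * Rmax ^ 2 / eps ^ 2) * (T ^ 2 * n ^ 2) * / l0).
  rewrite /Kc; field; lra.
have hr1 : 1 <= 16 * Rmax ^ 2 / eps ^ 2.
  apply: (Rmult_le_reg_r (eps ^ 2)); first nra.
  rewrite /Rdiv Rmult_assoc Rinv_l; nra.
have hr2 : 1 <= T ^ 2 * n ^ 2.
  have h1 : 1 <= T ^ 2 by nra.
  have h2 : 1 <= n ^ 2 by nra.
  have := Rmult_le_compat 1 (T ^ 2) 1 (n ^ 2); lra.
have hr3 : 2 <= / l0.
  apply: (Rmult_le_reg_r l0) => //; rewrite Rinv_l; lra.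
have hprod : 16 <= 8 * (16 * Rmax ^ 2 / eps ^ 2) * (T ^ 2 * n ^ 2) * / l0.
  have h1 : 1 <= (16 * Rmax ^ 2 / eps ^ 2) * (T ^ 2 * n ^ 2) by nra.
  nra.
have hNl : Kc * l0 <= N * l0 by apply: Rmult_le_compat_r; lra.
have hN1 : L <= N * l0 / 8 by nra.
have t1 : exp (N * T * l0 / 4 / (2 * T)) * (1 - l0 / 4) ^ N0 <= delta / (2 * n ^ 2 * m).
  apply: Rle_trans (_ : exp (N * T * l0 / 4 / (2 * T)) * exp (- (l0 / 4)) ^ N0 <= _).
    apply: Rmult_le_compat_l; first by apply: Rlt_le; apply: exp_pos.
    apply: pow_incr; split; first lra.
    have := exp_ineq1_le (- (l0 / 4)); lra.
  rewrite exp_pow -exp_plus -eL; apply: exp_le_mono.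
  have -> : N * T * l0 / 4 / (2 * T) = N * l0 / 8 by field; lra.
  rewrite -/N; lra.
set lam := eps / (4 * T * n * Rmax).
have hlk : lam ^ 2 * (N * T * l0 / 4) / 2 = N * l0 * T * eps ^ 2 / (128 * T ^ 2 * n ^ 2 * Rmax ^ 2).
  rewrite /lam; field; lra.
have hK2 : Kc * l0 * T * eps ^ 2 / (128 * T ^ 2 * n ^ 2 * Rmax ^ 2) = L * T * / l0.
  rewrite /Kc; field; lra.
have hpos : 0 < T * eps ^ 2 / (128 * T ^ 2 * n ^ 2 * Rmax ^ 2).
  apply: Rmult_lt_0_compat; first nra.
  apply: Rinv_0_lt_compat; nra.
have hN2 : 2 * L <= lam ^ 2 * (N * T * l0 / 4) / 2.
  rewrite hlk.
  have : Kc * l0 * (T * eps ^ 2 / (128 * T ^ 2 * n ^ 2 * Rmax ^ 2)) <=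
         N * l0 * (T * eps ^ 2 / (128 * T ^ 2 * n ^ 2 * Rmax ^ 2)).
    by apply: Rmult_le_compat_r; lra.
  have e1 : Kc * l0 * (T * eps ^ 2 / (128 * T ^ 2 * n ^ 2 * Rmax ^ 2)) = L * T * / l0.
    rewrite -hK2; rewrite /Rdiv; ring.
  have e2 : N * l0 * (T * eps ^ 2 / (128 * T ^ 2 * n ^ 2 * Rmax ^ 2)) =
            N * l0 * T * eps ^ 2 / (128 * T ^ 2 * n ^ 2 * Rmax ^ 2) by rewrite /Rdiv; ring.
  rewrite e1 e2 => h.
  have h3 : 2 <= T * / l0.
    have : 0 <= (T - 1) * / l0 by apply: Rmult_le_pos; lra.
    lra.
  have : L * 2 <= L * (T * / l0) by apply: Rmult_le_compat_l; lra.
  have e3 : L * T * / l0 = L * (T * / l0) by ring.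
  lra.
have t2 : exp (- (lam ^ 2 * (N * T * l0 / 4) / 2)) <= delta / (2 * n ^ 2 * m) / 2.
  apply: Rle_trans (_ : exp (- L) * exp (- L) <= _).
    rewrite -exp_plus; apply: exp_le_mono; lra.
  rewrite eL.
  have : delta / (2 * n ^ 2 * m) <= 1/2.
    apply: (Rmult_le_reg_r (2 * n ^ 2 * m)); first nra.
    rewrite /Rdiv Rmult_assoc Rinv_l; nra.
  have : 0 <= delta / (2 * n ^ 2 * m) by apply: Rmult_le_pos; [lra|apply: Rlt_le; apply: Rinv_0_lt_compat; nra].
  nra.
rewrite -/N -/lam.
have -> : INR 2 = 2 by simpl; ring.
set u := delta / (2 * n ^ 2 * m) in t1 t2.
have eu : n * (m * (u + n * (2 * (u / 2)))) = delta * (1 + n) / (2 * n).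
  rewrite /u; field; split; lra.
have hu : 0 <= u by rewrite /u; apply: Rmult_le_pos; [lra|apply: Rlt_le; apply: Rinv_0_lt_compat; nra].
apply: Rle_trans (_ : n * (m * (u + n * (2 * (u / 2)))) <= _).
  apply: Rmult_le_compat_l; first lra.
  apply: Rmult_le_compat_l; first lra.
  apply: Rplus_le_compat => //.
  apply: Rmult_le_compat_l; first lra.
  apply: Rmult_le_compat_l; lra.
rewrite eu.
apply: (Rmult_le_reg_r (2 * n)); first lra.
rewrite /Rdiv Rmult_assoc Rinv_l; nra.
Qed.

Theorem theorem8 (St A : finType) (D : bool * St -> R)
  (P : bool * St -> A -> bool * St -> R) (Rw rho : bool * St -> A -> R)
  (T : nat) (Rmax : R) (pi0 : bool * St -> A -> R) (lambda0 eps delta : R)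
  (N0 : nat)
  (Q : {ffun 'I_N0 -> episode (bool * St)%type A T} ->
       bool * St -> A -> bool * St -> R)
  (pistar : bool * St -> A -> R) :
  (0 < #|A|)%N ->
  is_dist D -> is_kernel P -> (1 <= T)%N ->
  0 < pz D Zmaj -> 0 < pz D Zmin ->
  0 < Rmax ->
  (forall s a, Rabs (Rw s a) <= Rmax) ->
  (forall s a, Rabs (rho s a) <= Rmax) ->
  is_policy pi0 ->
  0 < lambda0 ->
  (forall s a, lambda0 <= Lam P pi0 T D s a) ->
  0 < eps -> 0 < delta ->
  128 * INR T ^ 2 * INR #|{: bool * St}| ^ 2 * Rmax ^ 2
      * ln (2 * INR #|{: bool * St}| ^ 2 * INR #|A| / delta)
      / (lambda0 ^ 2 * eps ^ 2) <= INR N0 ->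
  (forall d, is_kernel (Q d)) ->
  PiDP P T D rho (eps / 4) pistar ->
  (forall pi, PiDP P T D rho (eps / 4) pi -> Ret P pi T D Rw <= Ret P pistar T D Rw) ->
  exists G : {set {ffun 'I_N0 -> episode (bool * St)%type A T}},
    1 - delta <= \big[Rplus/R0]_(d in G) data_prob D pi0 P d /\
    forall d, d \in G ->
      (exists pi, PiDP (Phat (Q d) d) T D rho (eps / 2) pi) /\
      forall pihat,
        PiDP (Phat (Q d) d) T D rho (eps / 2) pihat ->
        (forall pi, PiDP (Phat (Q d) d) T D rho (eps / 2) pi ->
           Ret (Phat (Q d) d) pi T D Rw <= Ret (Phat (Q d) d) pihat T D Rw) ->
        PiDP P T D rho eps pihat /\
        Ret P pistar T D Rw - Ret P pihat T D Rw <= eps.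
Proof.
move=> hA hD hP hT hpmaj hpmin hR hRw hrho hpi0 hl0 hLam he hd hN hQ hstar hmax.
have hT' : 1 <= INR T by apply: (le_INR 1); apply/leP.
case: (Rle_lt_dec 1 delta) => hd1.
  exists set0; split; first by rewrite big_set0; lra.
  by move=> d; rewrite in_set0.
have Rb : forall (X : bool * St -> A -> bool * St -> R) pi z, is_kernel X -> is_policy pi ->
    Rabs (rhoz X pi T D rho z) <= Rmax.
  move=> X pi z hX hpi; apply: (Ret_bound X pi T (Dz D z) rho Rmax hX hpi) => //.
  by case: z; [exact: Dz_dist|exact: Dz_dist].
case: (Rle_lt_dec (4 * Rmax) eps) => he4.
  exists [set: {ffun 'I_N0 -> episode (bool * St)%type A T}]; split.
    rewrite (eq_bigl xpredT); last by move=> d; rewrite in_setT.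
    have := data_total _ _ T N0 D pi0 P hD hP hpi0; rewrite /sumR => ->; lra.
  move=> d _.
  have hPh := Phat_kernel _ _ T N0 (Q d) d (hQ d).
  have [pol_s fair_s] := hstar.
  split.
    exists pistar; split => //.
    have := Rb _ pistar Zmaj hPh pol_s; have := Rb _ pistar Zmin hPh pol_s.
    move=> h1 h2; apply: Rle_trans (Rabs_triang _ _) _; rewrite Rabs_Ropp; lra.
  move=> pihat [pol_h fair_h] _; split.
    split => //.
    have := Rb _ pihat Zmaj hP pol_h; have := Rb _ pihat Zmin hP pol_h.
    move=> h1 h2; apply: Rle_trans (Rabs_triang _ _) _; rewrite Rabs_Ropp; lra.
  have := Ret_bound P pistar T D Rw Rmax hP pol_s hD hT hRw.
  have := Ret_bound P pihat T D Rw Rmax hP pol_h hD hT hRw.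
  move=> h1 h2; have := Rle_abs (Ret P pistar T D Rw); have := Rle_abs (- Ret P pihat T D Rw).
  rewrite Rabs_Ropp; lra.
set n := INR #|{: bool * St}|.
set m := INR #|A|.
have hSt : (0 < #|St|)%N.
  apply/card_gt0P; case: (pickP St) => [x _|h]; first by exists x.
  move: hpmaj; rewrite /pz /sumR big1; first lra.
  by move=> i; have := h i.
have hn : 2 <= n.
  rewrite /n card_prod card_bool mult_INR.
  have : 1 <= INR #|St| by apply: (le_INR 1); apply/leP.
  simpl; lra.
have hm : 1 <= m by rewrite /m; apply: (le_INR 1); apply/leP.
have hl1 : lambda0 * (n * m) <= 1.
  have [m0 m1] := mubar_dist P pi0 T D hP hpi0 hD hT.
  have : sumR (fun s : bool * St => sumR (fun a : A => lambda0)) <= sumR (fun s => sumR (fun a => Lam P pi0 T D s a)).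
    by apply: sumR_le => s0; apply: sumR_le => a0; exact: hLam.
  have eL : sumR (fun s => sumR (fun a => Lam P pi0 T D s a)) = 1.
    rewrite -m1; apply: eq_sumR => s0; rewrite /Lam sumR_scal.
    have := (hpi0 s0).2; rewrite /sumR => ->; ring.
  rewrite eL !sumR_const -/m -/n.
  lra.
set lam := eps / (4 * INR T * n * Rmax).
set k := INR N0 * INR T * lambda0 / 4.
have hnum := numeric n m (INR T) lambda0 eps Rmax delta N0 hn hm hT' hl0 hl1 he he4 hd hd1 hN.
have hden : 0 < 4 * INR T * n * Rmax by repeat apply: Rmult_lt_0_compat; lra.
have hlam : 0 <= lam <= 1/2.
  split; first by rewrite /lam; apply: Rmult_le_pos; [lra|apply: Rlt_le; apply: Rinv_0_lt_compat; lra].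
  rewrite /lam; apply: (Rmult_le_reg_r (4 * INR T * n * Rmax)); first lra.
  rewrite /Rdiv Rmult_assoc Rinv_l; last lra.
  have h1 : 2 <= INR T * n.
    have : 0 <= (INR T - 1) * n by apply: Rmult_le_pos; lra.
    lra.
  have : 2 * Rmax <= INR T * n * Rmax by apply: Rmult_le_compat_r; lra.
  lra.
have hk : 0 < k.
  rewrite /k.
  have hx : 1 < 2 * n ^ 2 * m / delta.
    apply: (Rmult_lt_reg_r delta) => //; rewrite /Rdiv Rmult_assoc Rinv_l; last lra.
    have : 4 <= n ^ 2 by nra.
    nra.
  have hL : 0 < ln (2 * n ^ 2 * m / delta) by rewrite -ln_1; apply: ln_increasing; lra.
  have hK : 0 < 128 * INR T ^ 2 * n ^ 2 * Rmax ^ 2 * ln (2 * n ^ 2 * m / delta) / (lambda0 ^ 2 * eps ^ 2).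
    apply: Rmult_lt_0_compat.
      apply: Rmult_lt_0_compat => //.
      have : 0 < INR T ^ 2 by nra.
      have : 0 < n ^ 2 by nra.
      have : 0 < Rmax ^ 2 by nra.
      move=> *; repeat apply: Rmult_lt_0_compat => //; lra.
    apply: Rinv_0_lt_compat; apply: Rmult_lt_0_compat; nra.
  have : 0 < INR N0 by apply: Rlt_le_trans hK hN.
  move=> h0; repeat apply: Rmult_lt_0_compat => //; lra.
exists [set d | goodb _ _ T N0 P lam k d]; split.
  have := good_mass _ _ T N0 D pi0 P hD hP hpi0 hT lam k lambda0 hlam hLam.
  move=> hg; apply: Rle_trans hg; apply: Rplus_le_compat_l; apply: Ropp_le_contravar.
  exact: hnum.
move=> d; rewrite inE => hg.
have hPh := Phat_kernel _ _ T N0 (Q d) d (hQ d).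
have hclose : forall s a s', Rabs (P s a s' - Phat (Q d) d s a s') <= lam.
  move=> s a s'; rewrite Rabs_minus_sym; exact: (good_Phat _ _ T N0 P lam k (Q d) d s a s' hk hg).
have eta_eq : Rmax * (INR T * (INR #|{: bool * St}| * lam)) / 2 = eps / 8.
  rewrite /lam -/n; field; lra.
apply: (det_conclusion _ _ D P (Phat (Q d) d) Rw rho T eps (eps / 8) pistar he) => //.
- move=> pi hpi; rewrite -eta_eq.
  apply: Ret_diff => //; lra.
- move=> pi z hpi; rewrite -eta_eq /rhoz.
  apply: Ret_diff => //; try lra.
  by case: z; [exact: Dz_dist|exact: Dz_dist].
- lra.
Qed.
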